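(* Let $0<t\le k<n$ be integers. (i) If a Steiner system $S(t,k,n)$ exists, then for $w=k$ and every $q\ge \binom{n-1}{t-1}/\binom{w-1}{t-1}+1$ there is an $(n,w,2w-t+1)_q$ code of size $\binom{n}{t}/\binom{w}{t}$, and it attains the code--anticode bound with the anticode $A'_q(n,w,t)$, i.e. its size times $|A'_q(n,w,t)|$ equals $|J_q(n,w)|$. Moreover the supports of its codewords are exactly the blocks of the given $S(t,k,n)$. (ii) If a Steiner system $S(t,k,n)$ exists, then for $w=n-k$ and every $q\ge \binom{n}{t}/\binom{k}{t}-\binom{n-1}{t-1}/\binom{k-1}{t-1}+1$ there is an $(n,w,n-t+1)_q$ code of size $\binom{n}{t}/\binom{n-w}{t}$, which attains the code--anticode bound with the anticode $A''_q(n,w,t)$. Moreover the complements of the supports of its codewords are exactly the blocks of the given $S(t,k,n)$. (iii) If no Steiner system $S(t,k,n)$ exists, then for no $q$ does there exist an $(n,k,2k-t+1)_q$ code of size $\binom{n}{t}/\binom{k}{t}$, nor an $(n,n-k,n-t+1)_q$ code of size $\binom{n}{t}/\binom{k}{t}$.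
   Context: $\mathbb{Z}_q=\{0,\dots,q-1\}$ (an alphabet), $[n]=\{1,\dots,n\}$; $\mathrm{supp}(x)=\{i:x_i\ne0\}$, $\mathrm{wt}(x)=|\mathrm{supp}(x)|$, $d$ = Hamming distance; $J_q(n,w)$ = weight-$w$ words of $\mathbb{Z}_q^n$. An $(n,w,d)_q$ code of size $M$ is a subset $C\subseteq J_q(n,w)$ with $|C|=M\ge 2$ and $d(x,y)\ge d$ for all distinct $x,y\in C$. A Steiner system $S(t,k,n)$ ($0<t\le k<n$) is a pair $(N,B)$ with $|N|=n$ and $B$ a set of $k$-subsets of $N$ (blocks) such that every $t$-subset of $N$ is contained in exactly one block. The anticodes are $A'_q(n,w,t)=\{a\in\mathbb{Z}_q^n: \mathrm{wt}((a_1,\dots,a_t))=t,\ \mathrm{wt}((a_{t+1},\dots,a_n))=w-t\}$ and $A''_q(n,w,t)=\{a\in\mathbb{Z}_q^n: a_1=\dots=a_t=0,\ \mathrm{wt}((a_{t+1},\dots,a_n))=w\}$; they have diameters $2w-t$ and $n-t$ respectively. A code attains the code--anticode bound with anticode $A$ if $|C|\cdot|A|=|J_q(n,w)|$. *)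

(* Defs.v *)
From mathcomp Require Import all_boot all_order all_algebra.
Set Implicit Arguments. Unset Strict Implicit. Unset Printing Implicit Defensive.

(* Words of Z_q^n: coordinates indexed by 'I_n (position i+1 of the paper is
   index i), symbols in 'I_q = {0,...,q-1}. *)
Definition word (q n : nat) := {ffun 'I_n -> 'I_q}.

Definition supp q n (x : word q n) : {set 'I_n} := [set i | val (x i) != 0%N].
Definition wt q n (x : word q n) : nat := #|supp x|.
Definition hdist q n (x y : word q n) : nat := #|[set i | x i != y i]|.

Definition J q n w : {set word q n} := [set x | wt x == w].

Definition is_code q n w d (C : {set word q n}) : Prop :=
  C \subset J q n w /\ (2 <= #|C|)%N /\
  (forall x y, x \in C -> y \in C -> x != y -> (d <= hdist x y)%N).

Definition steiner (t k n : nat) (B : {set {set 'I_n}}) : Prop :=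
  (0 < t)%N /\ (t <= k)%N /\ (k < n)%N /\
  (forall b, b \in B -> #|b| = k) /\
  (forall T : {set 'I_n}, #|T| = t -> exists! b, b \in B /\ T \subset b).

Definition head_pos n t : {set 'I_n} := [set i : 'I_n | (i < t)%N].

Definition anticode1 q n w t : {set word q n} :=
  [set a | (#|supp a :&: head_pos n t| == t) &&
           (#|supp a :&: ~: head_pos n t| == w - t)%N].

Definition anticode2 q n w t : {set word q n} :=
  [set a | (supp a :&: head_pos n t == set0) &&
           (#|supp a :&: ~: head_pos n t| == w)].

(* Main.v *)
Require Import Defs.
From mathcomp Require Import all_boot all_order all_algebra.
From mathcomp Require Import zify.
Import GRing.Theory Num.Theory.
Set Implicit Arguments. Unset Strict Implicit.

Lemma card_supp_eq q n (S : {set 'I_n}) :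
  #|[set x : word q.+1 n | supp x == S]| = q ^ #|S|.
Proof.
pose F := fun i : 'I_n => if i \in S then [pred a : 'I_q.+1 | val a != 0%N]
                          else [pred a : 'I_q.+1 | val a == 0%N].
have -> : [set x : word q.+1 n | supp x == S] = [set x in family F].
  apply/setP => x; rewrite !inE; apply/eqP/familyP.
    move=> HS i; rewrite /F -HS /supp inE; by case: ifP => // /negbFE.
  move=> H; apply/(@setP _ (supp x) S) => i; rewrite /supp inE; have := H i; rewrite /F.
  by case: ifP => _; rewrite inE => /= ->.
rewrite cardsE card_family foldrE big_map big_enum /=.
rewrite (bigID (mem S)) /= -[q ^ _]muln1; congr (_ * _).
  rewrite -prod_nat_const; apply: eq_bigr => i iS; rewrite /F iS.
  have -> : #|[pred a : 'I_q.+1 | val a != 0%N]| = #|predC1 (ord0 : 'I_q.+1)|.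
    by apply: eq_card => a; rewrite !inE.
  by rewrite cardC1 card_ord.
rewrite big1 // => i /negbTE iS; rewrite /F iS.
have -> : #|[pred a : 'I_q.+1 | val a == 0%N]| = #|pred1 (ord0 : 'I_q.+1)|.
  by apply: eq_card => a; rewrite !inE.
by rewrite card1.
Qed.

Lemma card_supp_pred q n w (P : pred {set 'I_n}) :
  (forall S, P S -> #|S| = w) ->
  #|[set x : word q.+1 n | P (supp x)]| = #|[set S | P S]| * q ^ w.
Proof.
move=> HP; rewrite -sum1_card (partition_big (@supp q.+1 n) P) /=; last first.
  by move=> x; rewrite inE.
rewrite -sum1_card big_distrl /=; apply: eq_big => [S|S PS]; first by rewrite inE.
rewrite mul1n -(HP _ PS) -card_supp_eq -sum1_card; apply: eq_bigl => x.
by rewrite !inE; case: eqP => [->|]; rewrite ?PS ?andbF.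
Qed.

Lemma card_head n t : (t <= n)%N -> #|head_pos n t| = t.
Proof.
move=> tn; have -> : head_pos n t = [set widen_ord tn i | i in 'I_t].
  apply/setP => i; rewrite /head_pos inE.
  apply/idP/imsetP => [it|[j _ ->]]; last exact: ltn_ord j.
  by exists (Ordinal it) => //; apply/val_inj.
by rewrite card_imset ?card_ord // => a b /(congr1 val) /= /val_inj.
Qed.

Lemma card_ac1_sets n w t : (t <= w)%N -> (t <= n)%N ->
  #|[set S : {set 'I_n} | (#|S :&: head_pos n t| == t) &&
           (#|S :&: ~: head_pos n t| == w - t)%N]| = 'C(n - t, w - t).
Proof.
move=> tw tn; set H := head_pos n t.
have cH : #|H| = t by exact: card_head.
have -> : [set S : {set 'I_n} | (#|S :&: H| == t) && (#|S :&: ~: H| == w - t)%N]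
   = [set U :|: H | U in [set U : {set 'I_n} | U \subset ~: H & #|U| == w - t]].
  apply/setP => S; rewrite inE; apply/andP/imsetP.
    case=> /eqP h1 /eqP h2; exists (S :&: ~: H).
      by rewrite inE subsetIr h2 eqxx.
    have HS : H \subset S.
      have : S :&: H \subset H by exact: subsetIr.
      rewrite subEproper; case/predU1P => [<-|]; first exact: subsetIl.
      by rewrite properEcard cH h1 ltnn andbF.
    by rewrite setUIl [~: H :|: H]setUC setUCr setIT (setUidPl HS).
  case=> U; rewrite inE => /andP [UH /eqP cU] ->.
  have d : U :&: H = set0.
    apply/setP=> i; rewrite in_set0 in_setI; apply/negP => /andP [iU iH].
    by move/subsetP: UH => /(_ i iU); rewrite in_setC iH.
  rewrite setIUl d set0U setIid setIUl setICr setU0.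
  by rewrite (setIidPl UH) cU cH !eqxx.
rewrite card_in_imset ?cards_draws.
  by congr 'C(_, _); have := cardsC H; rewrite card_ord; lia.
move=> U V; rewrite !inE => /andP [UH _] /andP [VH _] e.
have dU : U = (U :|: H) :&: ~: H.
  by rewrite setIUl setICr setU0 (setIidPl UH).
have dV : V = (V :|: H) :&: ~: H.
  by rewrite setIUl setICr setU0 (setIidPl VH).
by rewrite dU dV e.
Qed.

Lemma card_ac2_sets n w t : (t <= n)%N ->
  #|[set S : {set 'I_n} | (S :&: head_pos n t == set0) &&
           (#|S :&: ~: head_pos n t| == w)]| = 'C(n - t, w).
Proof.
move=> tn; set H := head_pos n t.
have cH : #|H| = t by exact: card_head.
have -> : [set S : {set 'I_n} | (S :&: H == set0) && (#|S :&: ~: H| == w)]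
   = [set U : {set 'I_n} | U \subset ~: H & #|U| == w].
  apply/setP => S; rewrite !inE setI_eq0 disjoints_subset.
  by case SH: (S \subset ~: H) => //=; rewrite (setIidPl SH).
rewrite cards_draws; congr 'C(_, _); have := cardsC H; rewrite card_ord; lia.
Qed.

Lemma bin_ident n k t : (t <= k)%N -> (k <= n)%N ->
  'C(n, t) * 'C(n - t, k - t) = 'C(n, k) * 'C(k, t).
Proof.
move=> tk kn.
have X0 : (0 < t`! * (k - t)`! * (n - k)`!)%N by rewrite !muln_gt0 !fact_gt0.
apply/eqP; rewrite -(eqn_pmul2r X0); apply/eqP.
have e1 : 'C(n - t, k - t) * ((k - t)`! * (n - k)`!) = (n - t)`!.
  have -> : (n - k = (n - t) - (k - t))%N by lia.
  by apply: bin_fact; lia.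
have e2 : 'C(n, t) * (t`! * (n - t)`!) = n`! by apply: bin_fact; lia.
have e3 : 'C(k, t) * (t`! * (k - t)`!) = k`! by apply: bin_fact.
have e4 : 'C(n, k) * (k`! * (n - k)`!) = n`! by apply: bin_fact.
transitivity ('C(n, t) * (t`! * ('C(n - t, k - t) * ((k - t)`! * (n - k)`!)))).
  by rewrite !mulnA; congr (_ * _); rewrite -!mulnA; congr (_ * _); rewrite mulnCA.
rewrite e1 e2 -e4 -e3.
by rewrite !mulnA; congr (_ * _); rewrite -!mulnA; congr (_ * _); rewrite mulnCA.
Qed.

Lemma draws_in n (A : {set 'I_n}) i t : (0 < t)%N -> i \in A ->
  #|[set T : {set 'I_n} | [&& T \subset A, #|T| == t & i \in T]]| = 'C(#|A|.-1, t.-1).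
Proof.
move=> t0 iA.
have -> : [set T : {set 'I_n} | [&& T \subset A, #|T| == t & i \in T]]
   = [set i |: U | U in [set U : {set 'I_n} | U \subset A :\ i & #|U| == t.-1]].
  apply/setP => T; rewrite inE; apply/and3P/imsetP.
    case=> TA /eqP cT iT; exists (T :\ i).
      rewrite inE setSD //= (cardsD1 i T) iT /= in cT *.
      by rewrite -cT.
    by rewrite setD1K.
  case=> U; rewrite inE => /andP [UA /eqP cU] ->.
  have iU : i \notin U by apply/negP => /(subsetP UA); rewrite !inE eqxx.
  split; first by rewrite subUset sub1set iA (subset_trans UA) // subD1set.
    by rewrite cardsU1 iU cU /=; apply/eqP; lia.
  by rewrite setU11.
rewrite card_in_imset ?cards_draws.
  by rewrite (cardsD1 i A) iA.
move=> U V; rewrite !inE => /andP [UA _] /andP [VA _] e.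
have iU : i \notin U by apply/negP => /(subsetP UA); rewrite !inE eqxx.
have iV : i \notin V by apply/negP => /(subsetP VA); rewrite !inE eqxx.
by rewrite -(setU1K iU) -(setU1K iV) e.
Qed.

Lemma subset_exists n (A : {set 'I_n}) m : (m <= #|A|)%N ->
  exists T : {set 'I_n}, T \subset A /\ #|T| = m.
Proof.
move=> mA; have : (0 < #|[set T : {set 'I_n} | T \subset A & #|T| == m]|)%N.
  by rewrite cards_draws bin_gt0.
by case/card_gt0P => T; rewrite inE => /andP [TA /eqP cT]; exists T.
Qed.

Lemma dcount n (F : {set {set 'I_n}}) (P : pred {set 'I_n}) :
  \sum_(T | P T) #|[set b in F | T \subset b]| =
  \sum_(b in F) #|[set T | P T & T \subset b]|.
Proof.
transitivity (\sum_(T | P T) \sum_(b | (b \in F) && (T \subset b)) 1).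
  apply: eq_bigr => T _; rewrite -sum1_card; apply: eq_bigl => b; by rewrite inE.
rewrite (exchange_big_dep (fun b => b \in F)) /=; last by move=> T b _ /andP [].
apply: eq_bigr => b bF; rewrite -sum1_card; apply: eq_bigl => T; by rewrite inE bF.
Qed.

Lemma sum_const_pred (T : finType) (P : pred T) c :
  \sum_(x | P x) c = #|[set x | P x]| * c.
Proof. by rewrite -sum_nat_const; apply: eq_bigl => x; rewrite inE. Qed.

Section St.
Variables (t k n : nat) (B : {set {set 'I_n}}).
Hypothesis HB : steiner t k B.

Lemma st_one (T : {set 'I_n}) : #|T| = t -> #|[set b in B | T \subset b]| = 1.
Proof.
move=> cT; case: HB => _ [_ [_ [_ H]]]; have [b0 [[b0B Tb0] U]] := H T cT.
apply/eqP/cards1P; exists b0; apply/setP => b; rewrite !inE.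
apply/andP/eqP => [[bB Tb]|->] //; by rewrite (U b).
Qed.

Lemma st_inter b1 b2 : b1 \in B -> b2 \in B -> b1 != b2 -> (#|b1 :&: b2| < t)%N.
Proof.
move=> b1B b2B ne; rewrite ltnNge; apply/negP => tI.
have [T [TI cT]] := subset_exists tI.
case: HB => _ [_ [_ [_ H]]]; have [b0 [_ U]] := H T cT.
move/negP: ne; apply; rewrite -(U b1) ?(U b2) //; split=> //;
  apply: (subset_trans TI); by [apply: subsetIl | apply: subsetIr].
Qed.

Lemma st_cnt : #|B| * 'C(k, t) = 'C(n, t).
Proof.
have := dcount B (fun T => #|T| == t).
rewrite (eq_bigr (fun _ => 1)); last by move=> T /eqP; exact: st_one.
rewrite sum_const_pred muln1 card_draws card_ord => ->.
rewrite -sum_nat_const; apply: eq_bigr => b bB.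
case: HB => _ [_ [_ [cB _]]]; rewrite -(cB b bB) -cards_draws.
by apply: eq_card => T; rewrite !inE andbC.
Qed.

Lemma st_rcnt i : #|[set b in B | i \in b]| * 'C(k.-1, t.-1) = 'C(n.-1, t.-1).
Proof.
case: HB => t0 [_ [_ [cB _]]].
have := dcount B (fun T => (#|T| == t) && (i \in T)).
rewrite (eq_bigr (fun _ => 1)); last by move=> T /andP [/eqP cT _]; exact: st_one.
rewrite sum_const_pred muln1.
have -> : #|[set T : {set 'I_n} | (#|T| == t) && (i \in T)]| = 'C(n.-1, t.-1).
  rewrite -[n in 'C(n.-1, _)]card_ord -cardsT -(draws_in t0 (in_setT i)).
  by apply: eq_card => T; rewrite !inE subsetT.
move=> ->; rewrite (bigID (fun b : {set 'I_n} => i \in b)) /= [X in _ + X]big1 ?addn0.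
  rewrite (eq_bigr (fun _ => 'C(k.-1, t.-1))).
    by rewrite sum_const_pred; congr (_ * _); apply: eq_card => b; rewrite !inE.
  move=> b /andP [bB ib]; rewrite -(cB b bB) -(draws_in t0 ib).
  by apply: eq_card => T; rewrite !inE andbC andbA.
move=> b /andP [bB /negP nib]; apply/eqP; rewrite cards_eq0; apply/eqP/setP => T.
rewrite !inE; apply/negP => /andP [/andP [_ iT] Tb]; apply: nib.
exact: (subsetP Tb).
Qed.

End St.

Lemma packing t k n (F : {set {set 'I_n}}) :
  (0 < t)%N -> (t <= k)%N -> (k < n)%N -> (forall b, b \in F -> #|b| = k) ->
  (forall b1 b2, b1 \in F -> b2 \in F -> b1 != b2 -> (#|b1 :&: b2| < t)%N) ->
  #|F| * 'C(k, t) = 'C(n, t) -> steiner t k F.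
Proof.
move=> t0 tk kn cF iF cnt; do 4! (split=> //).
have le1 (T : {set 'I_n}) : #|T| = t -> (#|[set b in F | T \subset b]| <= 1)%N.
  move=> cT; apply/card_le1_eqP => b1 b2; rewrite !inE => /andP [b1F Tb1] /andP [b2F Tb2].
  apply/eqP; apply/negPn/negP => ne; have := iF _ _ b2F b1F ne.
  rewrite ltnNge -{1}cT subset_leq_card //; apply/subsetP => x xT.
  by rewrite inE (subsetP Tb1) ?(subsetP Tb2).
have Hs := dcount F (fun T => #|T| == t).
have e1 : \sum_(b in F) #|[set T : {set 'I_n} | (#|T| == t) & T \subset b]| = 'C(n, t).
  rewrite -cnt -sum_nat_const; apply: eq_bigr => b bF.
  rewrite -(cF b bF) -cards_draws; by apply: eq_card => T; rewrite !inE andbC.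
rewrite e1 in Hs.
move=> T cT.
have c1 : #|[set b in F | T \subset b]| = 1.
  apply/anti_leq; rewrite le1 //=.
  have e : 'C(n, t) = \sum_(T0 : {set 'I_n} | #|T0| == t) 1 by rewrite sum_const_pred muln1 card_draws card_ord.
  have h1 := @bigD1 nat addn 0 _ T (fun T0 : {set 'I_n} => #|T0| == t) (fun T0 : {set 'I_n} => #|[set b in F | T0 \subset b]|) (introT eqP cT).
  have h2 := @bigD1 nat addn 0 _ T (fun T0 : {set 'I_n} => #|T0| == t) (fun T0 : {set 'I_n} => 1) (introT eqP cT).
  rewrite e h1 h2 /= in Hs.
  have : (\sum_(i : {set 'I_n} | (#|i| == t) && (i != T)) #|[set b in F | i \subset b]| <=
         \sum_(i : {set 'I_n} | (#|i| == t) && (i != T)) 1)%N.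
    by apply: leq_sum => T0 /andP [/eqP c0 _]; exact: le1.
  move=> h; rewrite lt0n; apply/eqP => c0; move: Hs; rewrite c0 add0n => Hs.
  by move: h; rewrite Hs add1n ltnn.
have [b0 e0] : exists b0, [set b in F | T \subset b] = [set b0] by apply/cards1P; rewrite c1.
exists b0; have : b0 \in [set b in F | T \subset b] by rewrite e0 set11.
rewrite inE => /andP [b0F Tb0]; split=> // b' [b'F Tb'].
have : b' \in [set b in F | T \subset b] by rewrite inE b'F.
by rewrite e0 inE => /eqP.
Qed.

Lemma construct q n (F : {set {set 'I_n}}) :
  (forall i, (#|[set c in F | i \in c]| <= q)%N) ->
  exists C : {set word q.+1 n}, [/\ #|C| = #|F|, [set supp x | x in C] = F &
    forall x y, x \in C -> y \in C -> x != y ->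
      supp x != supp y /\ (#|supp x :|: supp y| <= hdist x y)%N].
Proof.
move=> Hq.
pose s i := enum [set c in F | i \in c].
pose cw (b : {set 'I_n}) : word q.+1 n :=
  [ffun i => if i \in b then inord (index b (s i)).+1 else ord0].
have vin b i : b \in F -> i \in b -> val (cw b i) = (index b (s i)).+1.
  move=> bF ib; rewrite /cw ffunE ib /= inordK // ltnS.
  apply: leq_trans (Hq i); rewrite cardE -/(s i) index_mem /s mem_enum inE bF ib.
  by [].
have vout (b : {set 'I_n}) (i : 'I_n) : i \notin b -> val (cw b i) = 0%N.
  by move=> /negbTE nib; rewrite /cw ffunE nib.
have scw (b : {set 'I_n}) : b \in F -> supp (cw b) = b.
  move=> bF; apply/setP => i; rewrite /supp inE.
  case ib: (i \in b); first by rewrite vin.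
  by rewrite vout ?ib.
have diff (b1 b2 : {set 'I_n}) (i : 'I_n) : b1 \in F -> b2 \in F -> b1 != b2 -> i \in b1 :|: b2 ->
    cw b1 i != cw b2 i.
  move=> b1F b2F ne; rewrite inE => iU; rewrite -val_eqE.
  case i1: (i \in b1); case i2: (i \in b2).
  - rewrite (vin b1 i b1F i1) (vin b2 i b2F i2).
    rewrite eqSS; apply/negP => /eqP e; move/negP: ne; apply.
    have m1 : b1 \in s i by rewrite /s mem_enum inE b1F i1.
    have m2 : b2 \in s i by rewrite /s mem_enum inE b2F i2.
    by rewrite -(nth_index b1 m1) e nth_index.
  - by rewrite (vin b1 i b1F i1) (vout b2 i) ?i2.
  - by rewrite (vin b2 i b2F i2) (vout b1 i) ?i1.
  - by rewrite i1 i2 in iU.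
exists (cw @: F); split.
- rewrite card_in_imset // => b1 b2 b1F b2F e.
  by rewrite -(scw b1 b1F) -(scw b2 b2F) e.
- rewrite -imset_comp (eq_in_imset (g := id)) ?imset_id // => b bF /=; exact: scw.
move=> x y /imsetP [b1 b1F ->] /imsetP [b2 b2F ->] ne.
have nb : b1 != b2 by apply: contraNneq ne => ->.
rewrite !scw //; split=> //; apply: subset_leq_card; apply/subsetP => i iU.
by rewrite inE; apply: diff.
Qed.

Lemma hdist_le q n (x y : word q n) : (hdist x y <= #|supp x :|: supp y|)%N.
Proof.
apply: subset_leq_card; apply/subsetP => i; rewrite !inE.
apply: contraR; rewrite negb_or !negbK => /andP [/eqP a /eqP b].
by apply/eqP/val_inj; rewrite a b.
Qed.

Lemma cardC' n (A : {set 'I_n}) : #|~: A| = (n - #|A|)%N.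
Proof. by have := cardsC A; rewrite card_ord; lia. Qed.

Lemma rat_cnt a b c : (0 < b)%N ->
  (a%:R = c%:R / b%:R :> rat)%R <-> a * b = c.
Proof.
move=> b0; have nb : (b%:R != 0 :> rat)%R by rewrite pnatr_eq0 -lt0n.
split=> [e|<-]; last by rewrite natrM mulfK.
apply/eqP; rewrite -(eqr_nat rat) natrM e mulfVK //.
Qed.

Lemma bin_lt t k n : (0 < t)%N -> (t <= k)%N -> (k < n)%N -> ('C(k, t) < 'C(n, t))%N.
Proof.
move=> t0 tk kn; apply: (@leq_trans 'C(k.+1, t)); last exact: leq_bin2l.
case: t t0 tk => // t _ tk; rewrite binS -[X in (X < _)%N]addn0 ltn_add2l bin_gt0.
by apply: leq_trans tk.
Qed.

Lemma card_J q n w : #|J q.+1 n w| = 'C(n, w) * q ^ w.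
Proof.
rewrite /J (@card_supp_pred q n w (fun S : {set 'I_n} => #|S| == w)).
  by rewrite card_draws card_ord.
by move=> S /eqP.
Qed.

Lemma card_A1 q n w t : (t <= w)%N -> (t <= n)%N ->
  #|anticode1 q.+1 n w t| = 'C(n - t, w - t) * q ^ w.
Proof.
move=> tw tn; rewrite /anticode1 (@card_supp_pred q n w (fun S : {set 'I_n} => (#|S :&: head_pos n t| == t) &&
           (#|S :&: ~: head_pos n t| == w - t)%N)).
  by rewrite card_ac1_sets.
move=> S /andP [/eqP a /eqP b].
by rewrite -(cardsID (head_pos n t) S) setDE a b; lia.
Qed.

Lemma card_A2 q n w t : (t <= n)%N ->
  #|anticode2 q.+1 n w t| = 'C(n - t, w) * q ^ w.
Proof.
move=> tn; rewrite /anticode2 (@card_supp_pred q n w (fun S : {set 'I_n} => (S :&: head_pos n t == set0) &&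
           (#|S :&: ~: head_pos n t| == w))).
  by rewrite card_ac2_sets.
move=> S /andP [/eqP a /eqP b].
by rewrite -(cardsID (head_pos n t) S) setDE a b cards0.
Qed.

Lemma part1 (t k n : nat) (Ht : (0 < t)%N) (Htk : (t <= k)%N) (Hkn : (k < n)%N)
  (B : {set {set 'I_n}}) (HB : steiner t k B) (q : nat) :
  ((('C(n.-1, t.-1)%:R / 'C(k.-1, t.-1)%:R + 1 : rat) <= q%:R))%R ->
  exists C : {set word q n},
       [/\ is_code k (2 * k - t + 1) C,
           (#|C|%:R = ('C(n, t)%:R / 'C(k, t)%:R : rat))%R,
           (#|C| * #|anticode1 q n k t| = #|J q n k|)%N
         & [set supp x | x in C] = B].
Proof.
move=> Hq.
have cnt := st_cnt HB.
have cB : forall b, b \in B -> #|b| = k by case: HB => _ [_ [_ [cB _]]].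
have Ck0 : (0 < 'C(k.-1, t.-1))%N by rewrite bin_gt0; lia.
have Ckt : (0 < 'C(k, t))%N by rewrite bin_gt0.
have ri : forall i, (#|[set b in B | i \in b]| < q)%N.
  move=> i; rewrite -(ler_nat rat) -addn1 natrD.
  have <- : ('C(n.-1, t.-1)%:R / 'C(k.-1, t.-1)%:R : rat)%R = (#|[set b in B | i \in b]|%:R)%R.
    by symmetry; apply/rat_cnt => //; exact: st_rcnt.
  by [].
have i0 : 'I_n := Ordinal (leq_ltn_trans (leq0n k) Hkn).
case: q Hq ri => [|q] Hq ri; first by have := ri i0.
have [C [cC sC dC]] := construct (q := q) (F := B) (fun i => ri i).
have sCB x : x \in C -> supp x \in B by move=> xC; rewrite -sC; apply: imset_f.
exists C; split => //.
- split; first by apply/subsetP => x xC; rewrite inE /wt (cB _ (sCB x xC)).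
  split.
    rewrite cC; have := bin_lt Ht Htk Hkn; rewrite -cnt.
    by case: #|B| => [|[|m]] //; rewrite ?mul0n ?mul1n // ltnn.
  move=> x y xC yC ne; have [ns hd] := dC x y xC yC ne.
  have := st_inter HB (sCB x xC) (sCB y yC) ns.
  move: hd; rewrite cardsU (cB _ (sCB x xC)) (cB _ (sCB y yC)); lia.
- by apply/rat_cnt => //; rewrite cC.
rewrite card_A1 ?card_J //; last lia.
rewrite mulnA; congr (_ * _); rewrite cC.
apply/eqP; rewrite -(eqn_pmul2r Ckt) -mulnA [_ * 'C(k, t)]mulnC mulnA cnt.
by rewrite bin_ident // ltnW.
Qed.

Lemma part2 (t k n : nat) (Ht : (0 < t)%N) (Htk : (t <= k)%N) (Hkn : (k < n)%N)
  (B : {set {set 'I_n}}) (HB : steiner t k B) (q : nat) :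
     ((('C(n, t)%:R / 'C(k, t)%:R - 'C(n.-1, t.-1)%:R / 'C(k.-1, t.-1)%:R + 1 : rat)
        <= q%:R))%R ->
     exists C : {set word q n},
       [/\ is_code (n - k) (n - t + 1) C,
           (#|C|%:R = ('C(n, t)%:R / 'C(n - (n - k), t)%:R : rat))%R,
           (#|C| * #|anticode2 q n (n - k) t| = #|J q n (n - k)|)%N
         & [set ~: supp x | x in C] = B].
Proof.
move=> Hq.
have cnt := st_cnt HB.
have cB : forall b, b \in B -> #|b| = k by case: HB => _ [_ [_ [cB _]]].
have Ck0 : (0 < 'C(k.-1, t.-1))%N by rewrite bin_gt0; lia.
have Ckt : (0 < 'C(k, t))%N by rewrite bin_gt0.
have nk : (n - (n - k) = k)%N by lia.
pose F := [set ~: b | b in B].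
have cF : #|F| = #|B| by rewrite card_imset //; exact: setC_inj.
have Fi : forall i, #|[set c in F | i \in c]| = (#|B| - #|[set b in B | i \in b]|)%N.
  move=> i; rewrite -cardsDS; last by apply/subsetP => b; rewrite inE => /andP [].
  have -> : [set c in F | i \in c] = (@setC _) @: (B :\: [set b in B | i \in b]).
    apply/setP => c; apply/idP/imsetP.
      rewrite inE => /andP [/imsetP [b bB ->] ic]; exists b => //.
      by rewrite !inE bB andbT; rewrite inE in ic.
    case=> b; rewrite !inE => /andP [nb bB] ->; rewrite imset_f //= inE.
    by rewrite bB in nb.
  by rewrite card_imset //; exact: setC_inj.
have ri : forall i, (#|[set c in F | i \in c]| < q)%N.
  move=> i; rewrite Fi -(ler_nat rat) -addn1 natrD natrB; last first.
    by apply: subset_leq_card; apply/subsetP => b; rewrite inE => /andP [].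
  have <- : ('C(n.-1, t.-1)%:R / 'C(k.-1, t.-1)%:R : rat)%R = (#|[set b in B | i \in b]|%:R)%R.
    by symmetry; apply/rat_cnt => //; exact: st_rcnt.
  have <- : ('C(n, t)%:R / 'C(k, t)%:R : rat)%R = (#|B|%:R)%R.
    by symmetry; apply/rat_cnt.
  by [].
have i0 : 'I_n := Ordinal (leq_ltn_trans (leq0n k) Hkn).
case: q Hq ri => [|q] Hq ri; first by have := ri i0.
have [C [cC sC dC]] := construct (q := q) (F := F) (fun i => ri i).
have sCB x : x \in C -> ~: supp x \in B.
  move=> xC; have : supp x \in F by rewrite -sC; apply: imset_f.
  by case/imsetP => b bB ->; rewrite setCK.
have cS x : x \in C -> #|supp x| = (n - k)%N.
  by move=> xC; rewrite -(setCK (supp x)) cardC' (cB _ (sCB x xC)).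
exists C; split => //.
- split; first by apply/subsetP => x xC; rewrite inE /wt (cS x xC).
  split.
    rewrite cC cF; have := bin_lt Ht Htk Hkn; rewrite -cnt.
    by case: #|B| => [|[|m]] //; rewrite ?mul0n ?mul1n // ltnn.
  move=> x y xC yC ne; have [ns hd] := dC x y xC yC ne.
  have ns' : ~: supp x != ~: supp y by apply: contra ns => /eqP /setC_inj ->.
  have := st_inter HB (sCB x xC) (sCB y yC) ns'.
  move: hd; rewrite -setCU cardC'.
  have := subset_leq_card (subsetT (supp x :|: supp y)); rewrite cardsT card_ord.
  lia.
- by rewrite nk; apply/rat_cnt => //; rewrite cC cF.
- rewrite card_A2 ?card_J //; last lia.
  rewrite mulnA; congr (_ * _); rewrite cC cF.
  have -> : (n - k = (n - t) - (k - t))%N by lia.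
  rewrite bin_sub; last lia.
  have -> : (n - t - (k - t) = n - k)%N by lia.
  rewrite bin_sub; last lia.
  apply/eqP; rewrite -(eqn_pmul2r Ckt) -mulnA [_ * 'C(k, t)]mulnC mulnA cnt.
  by rewrite bin_ident // ltnW.
have -> : [set ~: supp x | x in C] = (@setC _) @: ((@supp _ _) @: C).
  by rewrite -imset_comp.
rewrite sC /F -imset_comp.
by rewrite (eq_imset (g := id)) ?imset_id // => b /=; rewrite setCK.
Qed.

Lemma part3a (t k n : nat) (Ht : (0 < t)%N) (Htk : (t <= k)%N) (Hkn : (k < n)%N) q
  (C : {set word q n}) : is_code k (2 * k - t + 1) C ->
  (#|C|%:R = ('C(n, t)%:R / 'C(k, t)%:R : rat))%R ->
  exists B : {set {set 'I_n}}, steiner t k B.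
Proof.
move=> [CJ [C2 Cd]] Cc.
have Ckt : (0 < 'C(k, t))%N by rewrite bin_gt0.
have cnt : #|C| * 'C(k, t) = 'C(n, t) by apply/rat_cnt.
have cS x : x \in C -> #|supp x| = k.
  by move=> xC; have := subsetP CJ x xC; rewrite inE => /eqP.
have key x y : x \in C -> y \in C -> x != y -> (#|supp x :&: supp y| < t)%N.
  move=> xC yC ne; have := Cd x y xC yC ne; have := hdist_le x y.
  rewrite cardsU (cS x xC) (cS y yC); lia.
exists [set supp x | x in C]; apply: packing => //.
- by move=> b /imsetP [x xC ->]; exact: cS.
- move=> b1 b2 /imsetP [x xC ->] /imsetP [y yC ->] ne.
  by apply: key => //; apply: contraNneq ne => ->.
rewrite card_in_imset // => x y xC yC e; apply/eqP/negPn/negP => ne.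
by have := key x y xC yC ne; rewrite e setIid (cS y yC) ltnNge Htk.
Qed.

Lemma part3b (t k n : nat) (Ht : (0 < t)%N) (Htk : (t <= k)%N) (Hkn : (k < n)%N) q
  (C : {set word q n}) : is_code (n - k) (n - t + 1) C ->
  (#|C|%:R = ('C(n, t)%:R / 'C(k, t)%:R : rat))%R ->
  exists B : {set {set 'I_n}}, steiner t k B.
Proof.
move=> [CJ [C2 Cd]] Cc.
have Ckt : (0 < 'C(k, t))%N by rewrite bin_gt0.
have cnt : #|C| * 'C(k, t) = 'C(n, t) by apply/rat_cnt.
have cS x : x \in C -> #|supp x| = (n - k)%N.
  by move=> xC; have := subsetP CJ x xC; rewrite inE => /eqP.
have key x y : x \in C -> y \in C -> x != y -> (#|~: supp x :&: ~: supp y| < t)%N.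
  move=> xC yC ne; have := Cd x y xC yC ne; have := hdist_le x y.
  rewrite -setCU cardC'.
  have := subset_leq_card (subsetT (supp x :|: supp y)); rewrite cardsT card_ord.
  lia.
exists [set ~: supp x | x in C]; apply: packing => //.
- by move=> b /imsetP [x xC ->]; rewrite cardC' (cS x xC); lia.
- move=> b1 b2 /imsetP [x xC ->] /imsetP [y yC ->] ne.
  by apply: key => //; apply: contraNneq ne => ->.
rewrite card_in_imset // => x y xC yC e; apply/eqP/negPn/negP => ne.
have := key x y xC yC ne; rewrite e setIid cardC' (cS y yC).
lia.
Qed.

Unset Implicit Arguments.
Set Strict Implicit.

Theorem mainTheorem6 (t k n : nat) (Ht : (0 < t)%N) (Htk : (t <= k)%N) (Hkn : (k < n)%N) :
  (* (i) *)
  (forall B : {set {set 'I_n}}, steiner t k B ->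
   let w := k in
   forall q : nat,
     ((('C(n.-1, t.-1)%:R / 'C(w.-1, t.-1)%:R + 1 : rat) <= q%:R))%R ->
     exists C : {set word q n},
       [/\ is_code w (2 * w - t + 1) C,
           (#|C|%:R = ('C(n, t)%:R / 'C(w, t)%:R : rat))%R,
           (#|C| * #|anticode1 q n w t| = #|J q n w|)%N
         & [set supp x | x in C] = B]) /\
  (* (ii) *)
  (forall B : {set {set 'I_n}}, steiner t k B ->
   let w := (n - k)%N in
   forall q : nat,
     ((('C(n, t)%:R / 'C(k, t)%:R - 'C(n.-1, t.-1)%:R / 'C(k.-1, t.-1)%:R + 1 : rat)
        <= q%:R))%R ->
     exists C : {set word q n},
       [/\ is_code w (n - t + 1) C,
           (#|C|%:R = ('C(n, t)%:R / 'C(n - w, t)%:R : rat))%R,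
           (#|C| * #|anticode2 q n w t| = #|J q n w|)%N
         & [set ~: supp x | x in C] = B]) /\
  (* (iii) *)
  ((~ exists B : {set {set 'I_n}}, steiner t k B) ->
   forall q : nat,
     (~ exists C : {set word q n},
          is_code k (2 * k - t + 1) C /\
          (#|C|%:R = ('C(n, t)%:R / 'C(k, t)%:R : rat))%R) /\
     (~ exists C : {set word q n},
          is_code (n - k) (n - t + 1) C /\
          (#|C|%:R = ('C(n, t)%:R / 'C(k, t)%:R : rat))%R)).
Proof.
split; [|split].
- move=> B HB w q Hq; exact: part1.
- move=> B HB w q Hq; exact: part2.
move=> nS q; split=> -[C [HC Hc]]; apply: nS.
  exact: (part3a Ht Htk Hkn HC Hc).
exact: (part3b Ht Htk Hkn HC Hc).
Qed.
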